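(* Every connected graph that contains no induced subgraph isomorphic to $P_4$ and no induced subgraph isomorphic to $2K_2$ is detour covered.
   Context: All graphs are finite and simple. $P_4$ is the path on $4$ vertices and $2K_2$ is the graph consisting of two vertex-disjoint edges. A detour of a graph is a longest path in it; a graph is detour covered if every vertex lies in some detour. *)

(* Defs.v *)
From mathcomp Require Import all_boot.
Set Implicit Arguments. Unset Strict Implicit. Unset Printing Implicit Defensive.

Definition simple_graph (T : finType) (e : rel T) : Prop :=
  symmetric e /\ irreflexive e.

Definition connected_graph (T : finType) (e : rel T) : Prop :=
  forall x y : T, connect e x y.

(* A path: a nonempty sequence of pairwise distinct vertices, consecutive
   ones adjacent. Its length is measured by number of vertices (same
   maximizers as number of edges). *)
Definition is_path (T : finType) (e : rel T) (p : seq T) : Prop :=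
  match p with
  | [::] => False
  | x :: q => path e x q && uniq p
  end.

Definition is_detour (T : finType) (e : rel T) (p : seq T) : Prop :=
  is_path e p /\ forall q, is_path e q -> size q <= size p.

Definition detour_covered (T : finType) (e : rel T) : Prop :=
  forall v : T, exists p, is_detour e p /\ v \in p.

Definition has_induced_P4 (T : finType) (e : rel T) : Prop :=
  exists a b c d : T, uniq [:: a; b; c; d] /\
    [&& e a b, e b c, e c d, ~~ e a c, ~~ e b d & ~~ e a d].

Definition has_induced_2K2 (T : finType) (e : rel T) : Prop :=
  exists a b c d : T, uniq [:: a; b; c; d] /\
    [&& e a b, e c d, ~~ e a c, ~~ e a d, ~~ e b c & ~~ e b d].

(* Main.v *)
Require Import Defs.
From mathcomp Require Import all_boot.
From mathcomp Require Import zify.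
From Stdlib Require Import Classical.

Set Implicit Arguments. Unset Strict Implicit. Unset Printing Implicit Defensive.

Section Aux.
Variables (T : finType) (e : rel T).

Lemma is_pathP p : is_path e p <-> [/\ p != [::], sorted e p & uniq p].
Proof.
case: p => [|x q] /=; split => //; first by case.
  by case/andP.
by case=> _ -> ->.
Qed.

Lemma uniq_count (s t : seq T) : uniq t ->
  (forall y, count_mem y s <= count_mem y t) -> uniq s.
Proof.
move=> Ut H; apply: count_mem_uniq => y.
have := H y; rewrite (count_uniq_mem _ Ut).
case: (boolP (y \in s)) => ys.
  have : 0 < count_mem y s by rewrite -has_count has_pred1.
  by case: (y \in t); lia.
by move/count_memPn: ys => ->.
Qed.

Lemma count_le1 (s : seq T) x : uniq s -> count_mem x s <= 1.
Proof. move=> u; rewrite (count_uniq_mem _ u); by case: (x \in s). Qed.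

Lemma sortedA L0 c s : sorted e (L0 ++ c :: s) = sorted e (rcons L0 c) && path e c s.
Proof. case: L0 => [|x L0] //=. by rewrite cat_path rcons_path /= andbA. Qed.

Lemma pathB v L0 c s : path e v (L0 ++ c :: s) =
  [&& e v (head c L0), sorted e (rcons L0 c) & path e c s].
Proof. case: L0 => [|x L0] //=. by rewrite cat_path rcons_path /= !andbA. Qed.

Hypothesis esym : symmetric e.
Hypothesis eirr : irreflexive e.

Lemma path_swap y v L R : sorted e (L ++ y :: R) ->
  (forall z, e y z -> e v z) -> sorted e (L ++ v :: R).
Proof.
move=> sP H.
have Hp : forall a L', path e a (L' ++ y :: R) -> path e a (L' ++ v :: R).
  move=> a L'; elim: L' a => [|b L' IH] a /=.
    move=> /andP [ay py]; apply/andP; split.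
      by rewrite esym; apply: H; rewrite esym.
    by case: R py {sP} => //= r R' /andP [/H -> ->].
  by case/andP => -> /IH.
move: sP; case: L => [|a L] /=.
  by case: (R) => //= r R' /andP [/H -> ->].
exact: Hp.
Qed.

Hypothesis noP4 : ~ has_induced_P4 e.
Hypothesis no2K2 : ~ has_induced_2K2 e.

Lemma nested u w : u != w -> ~~ e u w ->
  (forall z, e u z -> e w z) \/ (forall z, e w z -> e u z).
Proof.
move=> uw nuw.
case: (boolP [forall z, e u z ==> e w z]) => [/forallP H|/forallPn [x]].
  by left => z /(implyP (H z)).
rewrite negb_imply => /andP [ux nwx].
case: (boolP [forall z, e w z ==> e u z]) => [/forallP H|/forallPn [y]].
  by right => z /(implyP (H z)).
rewrite negb_imply => /andP [wy nuy].
exfalso.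
have ux' : u != x by apply/eqP => h; rewrite h eirr in ux.
have uy : u != y by apply/eqP => h; move: nuw; rewrite esym h wy.
have xw : x != w by apply/eqP => h; rewrite h in ux; rewrite ux in nuw.
have yw : y != w by apply/eqP => h; rewrite h eirr in wy.
have wy' : w != y by rewrite eq_sym.
case exy: (e x y).
- have xy : x != y by apply/eqP => h; rewrite h eirr in exy.
  apply: noP4; exists u, x, y, w; split.
    by rewrite /= !inE !negb_or ux' uy uw xy xw yw.
  by rewrite ux exy (esym y w) wy nuy (esym x w) nwx nuw.
- have xy : x != y by apply/eqP => h; rewrite -h ux in nuy.
  apply: no2K2; exists u, x, w, y; split.
    by rewrite /= !inE !negb_or ux' uy uw xy xw wy'.
  by rewrite ux wy nuw nuy (esym x w) nwx exy.
Qed.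

End Aux.

Ltac plia :=
  repeat match goal with |- context [nat_of_bool ?b] => generalize (nat_of_bool b) end;
  repeat match goal with |- context [count ?p ?s] => generalize (count p s) end;
  repeat match goal with |- context [size ?s] => generalize (size s) end;
  repeat match goal with H : _ |- _ => clear H end; intros; lia.

Ltac cnt := rewrite /= ?count_cat /= ?count_cat /=; plia.

Theorem theorem10 (T : finType) (e : rel T) :
  simple_graph e -> connected_graph e ->
  ~ has_induced_P4 e -> ~ has_induced_2K2 e ->
  detour_covered e.
Proof.
move=> [esym eirr] conn noP4 no2K2 v.
have [P [pP hlong]] : exists P, is_detour e P.
  apply: NNPP => nd.
  have step : forall p, is_path e p -> exists q, is_path e q /\ size p < size q.
    move=> p pp; apply: NNPP => nq; apply: nd; exists p; split => // q qq.
    rewrite leqNgt; apply/negP => lt; apply: nq; by exists q.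
  have big : forall m, exists p, is_path e p /\ m <= size p.
    elim=> [|m [p [pp mp]]]; first by exists [:: v]; split.
    have [q [qq pq]] := step p pp; exists q; split => //; lia.
  have [q [qq qs]] := big #|T|.+1.
  move/is_pathP: qq => [_ _ /card_uniqP uq].
  have := max_card (mem q); rewrite uq; lia.
case: (boolP (v \in P)) => [vP|nvP]; first by exists P.
have fin : forall q, is_path e q -> size q = size P -> v \in q ->
    exists p, is_detour e p /\ v \in p.
  move=> q qq sq vq; exists q; split => //; split => // r /hlong; by rewrite sq.
have con : forall q, is_path e q -> size q = (size P).+1 -> False.
  by move=> q /hlong qs sq; lia.
move/is_pathP: (pP) => [Pn sP uP].
have uvP : uniq (v :: P) by rewrite /= nvP uP.
case: (boolP [exists y, [&& y \in P, ~~ e v y & [forall z, e y z ==> e v z]]]).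
  case/existsP => y /and3P [yP nvy /forallP Hy].
  have [L [R defP]] : exists L R, P = L ++ y :: R.
    by case/splitPr: yP => L R; exists L, R.
  subst P.
  apply: (fin (L ++ v :: R)); last by rewrite mem_cat inE eqxx orbT.
  - apply/is_pathP; split.
    + by case: (L).
    + apply: (path_swap esym sP) => z; exact: (implyP (Hy z)).
    + by apply: (uniq_count uvP) => z; cnt.
  - by rewrite !size_cat.
rewrite negb_exists => /forallP Hn.
have Hall : forall y, y \in P -> ~~ e v y -> forall z, e v z -> e y z.
  move=> y yP nvy.
  have vy : v != y by apply: contraNneq nvP => ->.
  case: (nested esym eirr noP4 no2K2 vy nvy) => // Hyv.
  exfalso; move: (Hn y); rewrite yP nvy /=; move/negP; apply.
  by apply/forallP => z; apply/implyP; exact: Hyv.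
have [w vw] : exists w, e v w.
  case EP: P Pn => [|p0 P'] // _.
  have vp0 : v != p0 by apply: contraNneq nvP => ->; rewrite EP mem_head.
  case/connectP: (conn v p0) => [[|w s]] /=.
    by move=> _ h; rewrite h eqxx in vp0.
  by case/andP => vw _ _; exists w.
case: (boolP (w \in P)) => [wP|nwP]; last first.
  exfalso.
  case EP: P Pn => [|p0 P'] // _; subst P.
  move: sP => /= sP.
  case: (boolP (e v p0)) => vp.
    apply: (con (v :: p0 :: P')) => //; apply/is_pathP; split => //.
    by rewrite /= vp sP.
  have wp0 : e w p0 by rewrite esym; apply: (Hall p0 (mem_head _ _) vp).
  apply: (con (w :: p0 :: P')) => //; apply/is_pathP; split => //.
    by rewrite /= wp0 sP.
  by rewrite /= nwP -/(uniq (p0 :: P')) uP.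
have [L [R defP]] : exists L R, P = L ++ w :: R.
  by case/splitPr: wP => L R; exists L, R.
case/lastP: L defP => [|L a] defP.
  subst P; exfalso; apply: (con (v :: w :: R)) => //.
  by apply/is_pathP; split => //; rewrite /= vw; move: sP => /= ->.
case: R defP => [|b R] defP.
  subst P; exfalso; apply: (con (rcons L a ++ [:: w; v])); last first.
    by rewrite !size_cat /=; plia.
  apply/is_pathP; split; first by case: (L).
    move: sP; rewrite !cat_rcons !sortedA /= !andbT => /andP [-> ->] /=.
    by rewrite esym.
  by apply: (uniq_count uvP) => z; cnt.
case/lastP: L defP => [|L0 c] defP.
  subst P; apply: (fin (v :: w :: b :: R)) => //; last by rewrite mem_head.
  apply/is_pathP; split => //; last first.
    by apply: (uniq_count uvP) => z; cnt.
  by move: sP => /= /and3P [_ -> ->]; rewrite vw.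
case: R defP => [|d R1] defP.
  subst P; apply: (fin (rcons (rcons L0 c) a ++ [:: w; v])); last first.
  - by rewrite !mem_cat !inE eqxx !orbT.
  - by rewrite !size_cat.
  apply/is_pathP; split; first by case: (L0).
    move: sP; rewrite !cat_rcons !sortedA /= !andbT => /and4P [-> -> -> _] /=.
    by rewrite esym.
  by apply: (uniq_count uvP) => z; cnt.
rewrite !cat_rcons in defP; subst P.
move: (sP); rewrite sortedA /= => /and5P [sL ca aw wb /andP [bd pR]].
have p1P : head c L0 \in L0 ++ c :: a :: w :: b :: d :: R1.
  by case: (L0) => [|x ?] /=; rewrite inE eqxx.
have nvp1 : ~~ e v (head c L0).
  apply/negP => vp1; apply: (con (v :: L0 ++ c :: a :: w :: b :: d :: R1)) => //.
  apply/is_pathP; split => //.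
  by rewrite /= pathB vp1 sL /= ca aw wb bd pR.
have wp1 : e w (head c L0) by rewrite esym; apply: (Hall _ p1P nvp1).
have pkP : last d R1 \in L0 ++ c :: a :: w :: b :: d :: R1.
  have := mem_last d R1; rewrite !mem_cat !inE => ->; by rewrite !orbT.
have nvpk : ~~ e v (last d R1).
  apply/negP => vpk; apply: (con (L0 ++ c :: a :: w :: b :: d :: R1 ++ [:: v])).
  - apply/is_pathP; split; first by case: (L0).
      by rewrite sortedA sL /= ca aw wb bd cat_path pR /= esym vpk.
    by apply: (uniq_count uvP) => z; cnt.
  - by rewrite !size_cat /= size_cat /=; plia.
have wpk : e (last d R1) w by apply: (Hall _ pkP nvpk).
have nab : ~~ e a b.
  apply/negP => ab; apply: (con (v :: w :: L0 ++ c :: a :: b :: d :: R1)).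
  - apply/is_pathP; split => //.
      by rewrite /= vw pathB wp1 sL /= ca ab bd pR.
    by apply: (uniq_count uvP) => z; cnt.
  - by rewrite /= !size_cat /=; plia.
have ab_neq : a != b.
  apply/eqP => eab; subst a; have := count_le1 b uP.
  rewrite count_cat /= eqxx /=; plia.
case: (nested esym eirr noP4 no2K2 ab_neq nab) => H.
  have cb : e c b by rewrite esym; apply: H; rewrite esym.
  apply: (fin (L0 ++ c :: b :: d :: R1 ++ [:: w; v])).
  - apply/is_pathP; split; first by case: (L0).
      by rewrite sortedA sL /= cb bd cat_path pR /= wpk esym vw.
    by apply: (uniq_count uvP) => z; cnt.
  - by rewrite !size_cat /= size_cat /=; plia.
  - by rewrite !(mem_cat, inE) eqxx !orbT.
have ad : e a d by apply: H.
apply: (fin (v :: w :: L0 ++ c :: a :: d :: R1)); last by rewrite mem_head.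
- apply/is_pathP; split => //.
    by rewrite /= vw pathB wp1 sL /= ca ad pR.
  by apply: (uniq_count uvP) => z; cnt.
- by rewrite /= !size_cat /=; plia.
Qed.
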